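(* Let $(G,\mathcal{P})$ and $(H,\mathcal{Q})$ be group pairs. (i) If $q\colon(G,\mathcal{P})\to(H,\mathcal{Q})$ is a quasi-isometry of pairs such that the projections $\dot q\to G/\mathcal{P}$ and $\dot q\to H/\mathcal{Q}$ are bijective, then $(G,\mathcal{P})$ and $(H,\mathcal{Q})$ are strongly quasi-isometric. (ii) If $(G,\mathcal{P})$ and $(H,\mathcal{Q})$ are strongly quasi-isometric, then they are quasi-isometric (i.e. there is a quasi-isometry of pairs between them).
   Context: A group pair $(G,\mathcal{P})$: $G$ finitely generated with a word metric for a finite generating set, $\mathcal{P}$ a non-empty finite collection of subgroups (repetitions allowed); $G/\mathcal{P}=\coprod_{P\in\mathcal{P}}G/P$, elements viewed as cosets (subsets of $G$). $f$ is $(L,C)$-Lipschitz if $d(f(x),f(x'))\le L\,d(x,x')+C$. Fix $L\ge1,C\ge0,M\ge0$. For $q\colon G\to H$ let $\dot q=\{(A,B)\in G/\mathcal{P}\times H/\mathcal{Q}: \text{Hausdorff distance in }H\text{ between }q(A)\text{ and }B\text{ is }<M\}$. An $(L,C,M)$-quasi-isometry of pairs is an $(L,C)$-quasi-isometry $q\colon G\to H$ such that both projections $\dot q\to G/\mathcal{P}$, $\dot q\to H/\mathcal{Q}$ are surjective. An $(L,C,M)$-Lipschitz map of pairs $f=(f_1,f_2)\colon(G,\mathcal{P})\to(H,\mathcal{Q})$ is an $(L,C)$-Lipschitz $f_1\colon G\to H$ and a function $f_2\colon G/\mathcal{P}\to H/\mathcal{Q}$ with Hausdorff distance between $f_1(A)$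 and $f_2(A)$ less than $M$ for all $A$. $(f,r)$ is an $(L,C,M)$-quasi-retraction of pairs if $f\colon(G,\mathcal{P})\to(H,\mathcal{Q})$, $r\colon(H,\mathcal{Q})\to(G,\mathcal{P})$ are such maps with $d_G(r_1f_1(g),g)\le C$ for all $g$ and $r_2\circ f_2=\mathrm{id}$. $f$ is a strong $(L,C,M)$-quasi-isometry of pairs if there is an $(L,C,M)$-Lipschitz map of pairs $r$ with $(f,r)$ and $(r,f)$ both $(L,C,M)$-quasi-retractions. Pairs are (strongly) quasi-isometric if such maps exist for some constants $L,C,M$. *)

(* Defs.v *)
From Stdlib Require Import Reals List ClassicalEpsilon.
From Coquelicot Require Import Rbar Lub.
Open Scope R_scope.

Record grp := Grp {
  gcar :> Type;
  gmul : gcar -> gcar -> gcar;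
  ginv : gcar -> gcar;
  gone : gcar;
  gmulA : forall x y z, gmul x (gmul y z) = gmul (gmul x y) z;
  gmul1 : forall x, gmul gone x = x;
  gmulV : forall x, gmul (ginv x) x = gone }.

Definition is_subgroup (G : grp) (P : G -> Prop) : Prop :=
  P (gone G) /\ (forall x y, P x -> P y -> P (gmul G x y)) /\
  (forall x, P x -> P (ginv G x)).

(** Words over a finite generating set S (letters are generators or their
    inverses; the boolean flags an inverse). *)
Fixpoint word_prod (G : grp) (w : list (bool * G)) : G :=
  match w with
  | nil => gone G
  | (b, s) :: w' => gmul G (if b then ginv G s else s) (word_prod G w')
  end.

Definition word_le (G : grp) (S : list G) (x : G) (n : nat) : Prop :=
  exists w : list (bool * G), Forall (fun p => In (snd p) S) w /\
    (length w <= n)%nat /\ word_prod G w = x.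

Definition generates (G : grp) (S : list G) : Prop :=
  forall x : G, exists n, word_le G S x n.

Definition wlen (G : grp) (S : list G) (x : G) : nat :=
  epsilon (inhabits 0%nat)
    (fun n => word_le G S x n /\ forall m, word_le G S x m -> (n <= m)%nat).

Definition wdist (G : grp) (S : list G) (x y : G) : nat :=
  wlen G S (gmul G (ginv G x) y).

(** Group pairs: finitely generated group with a fixed finite generating
    set, and a non-empty finite family P_0, ..., P_{n-1} of subgroups
    (repetitions allowed). *)
Record gpair := GPair {
  gp_grp :> grp;
  gp_gens : list gp_grp;
  gp_gen : generates gp_grp gp_gens;
  gp_n : nat;
  gp_npos : (0 < gp_n)%nat;
  gp_sub : nat -> gp_grp -> Prop;
  gp_subP : forall i, (i < gp_n)%nat -> is_subgroup gp_grp (gp_sub i) }.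

Definition dist (X : gpair) (x y : X) : R := INR (wdist X (gp_gens X) x y).

Definition lcoset (G : grp) (g : G) (P : G -> Prop) : G -> Prop :=
  fun x => P (gmul G (ginv G g) x).

(** G/P = disjoint union over i < n of G/P_i: elements are tagged cosets. *)
Definition is_coset (X : gpair) (c : nat * (X -> Prop)) : Prop :=
  (fst c < gp_n X)%nat /\ exists g : X, snd c = lcoset X g (gp_sub X (fst c)).

Definition cosets (X : gpair) : Type := { c : nat * (X -> Prop) | is_coset X c }.

Definition cset (X : gpair) (A : cosets X) : X -> Prop := snd (proj1_sig A).

Definition img {A B : Type} (f : A -> B) (S : A -> Prop) : B -> Prop :=
  fun b => exists a, S a /\ f a = b.

Definition pdist (X : gpair) (a : X) (B : X -> Prop) : Rbar :=
  Rbar_glb (fun r => exists b, B b /\ r = Finite (dist X a b)).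

Definition rbar_max (x y : Rbar) : Rbar :=
  if Rbar_le_dec x y then y else x.

Definition hdist (X : gpair) (A B : X -> Prop) : Rbar :=
  rbar_max (Rbar_lub (fun r => exists a, A a /\ r = pdist X a B))
           (Rbar_lub (fun r => exists b, B b /\ r = pdist X b A)).

Definition haus_lt (X : gpair) (A B : X -> Prop) (M : R) : Prop :=
  Rbar_lt (hdist X A B) (Finite M).

Definition lipschitz (X Y : gpair) (L C : R) (f : X -> Y) : Prop :=
  forall x x', dist Y (f x) (f x') <= L * dist X x x' + C.

Definition quasi_isometry (X Y : gpair) (L C : R) (q : X -> Y) : Prop :=
  (forall x x', dist X x x' / L - C <= dist Y (q x) (q x') /\
                dist Y (q x) (q x') <= L * dist X x x' + C) /\
  (forall y : Y, exists x : X, dist Y (q x) y <= C).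

Definition qdot (X Y : gpair) (M : R) (q : X -> Y) (A : cosets X) (B : cosets Y) : Prop :=
  haus_lt Y (img q (cset X A)) (cset Y B) M.

Definition qi_pairs (X Y : gpair) (L C M : R) (q : X -> Y) : Prop :=
  quasi_isometry X Y L C q /\
  (forall A, exists B, qdot X Y M q A B) /\
  (forall B, exists A, qdot X Y M q A B).

Definition lip_map_pairs (X Y : gpair) (L C M : R) (f1 : X -> Y)
  (f2 : cosets X -> cosets Y) : Prop :=
  lipschitz X Y L C f1 /\
  forall A, haus_lt Y (img f1 (cset X A)) (cset Y (f2 A)) M.

Definition quasi_retraction (X Y : gpair) (L C M : R)
  (f1 : X -> Y) (f2 : cosets X -> cosets Y)
  (r1 : Y -> X) (r2 : cosets Y -> cosets X) : Prop :=
  lip_map_pairs X Y L C M f1 f2 /\ lip_map_pairs Y X L C M r1 r2 /\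
  (forall g, dist X (r1 (f1 g)) g <= C) /\
  (forall A, r2 (f2 A) = A).

Definition good_consts (L C M : R) : Prop := 1 <= L /\ 0 <= C /\ 0 <= M.

Definition strong_qi_pairs (X Y : gpair) (L C M : R)
  (f1 : X -> Y) (f2 : cosets X -> cosets Y) : Prop :=
  exists (r1 : Y -> X) (r2 : cosets Y -> cosets X),
    quasi_retraction X Y L C M f1 f2 r1 r2 /\
    quasi_retraction Y X L C M r1 r2 f1 f2.

Definition strongly_qi (X Y : gpair) : Prop :=
  exists L C M f1 f2, good_consts L C M /\ strong_qi_pairs X Y L C M f1 f2.

Definition qi (X Y : gpair) : Prop :=
  exists L C M q, good_consts L C M /\ qi_pairs X Y L C M q.

(* Main.v *)
Require Import Defs.
From Stdlib Require Import Reals.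
From Stdlib Require Import List ClassicalEpsilon Classical Lra Lia.
From Coquelicot Require Import Rbar Lub.
Import Defs.
Open Scope R_scope.

Section Grp.
Variable G : grp.

Lemma ginv_r x : gmul G x (ginv G x) = gone G.
Proof.
  assert (H1: gmul G (ginv G x) (gmul G x (ginv G x)) = ginv G x)
    by (rewrite gmulA, gmulV, gmul1; reflexivity).
  transitivity (gmul G (gmul G (ginv G (ginv G x)) (ginv G x)) (gmul G x (ginv G x))).
  - rewrite gmulV, gmul1. reflexivity.
  - rewrite <- gmulA, H1. apply gmulV.
Qed.

Lemma gmul1r x : gmul G x (gone G) = x.
Proof.
  transitivity (gmul G x (gmul G (ginv G x) x)).
  - rewrite gmulV; reflexivity.
  - rewrite gmulA, ginv_r, gmul1; reflexivity.
Qed.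

Lemma inv_uniq x y : gmul G y x = gone G -> y = ginv G x.
Proof.
  intro H. transitivity (gmul G y (gmul G x (ginv G x))).
  - rewrite ginv_r, gmul1r; auto.
  - rewrite gmulA, H, gmul1; auto.
Qed.

Lemma ginv_mul a b : ginv G (gmul G a b) = gmul G (ginv G b) (ginv G a).
Proof.
  symmetry; apply inv_uniq.
  rewrite <- gmulA, (gmulA G (ginv G a) a b), gmulV, gmul1, gmulV. reflexivity.
Qed.

Lemma ginv_inv a : ginv G (ginv G a) = a.
Proof. symmetry; apply inv_uniq; apply ginv_r. Qed.

Lemma word_prod_app w1 w2 :
  word_prod G (w1 ++ w2) = gmul G (word_prod G w1) (word_prod G w2).
Proof.
  induction w1 as [|[b s] w1 IH]; simpl.
  - rewrite gmul1; auto.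
  - rewrite IH, gmulA; auto.
Qed.

Definition winv (w : list (bool * G)) :=
  rev (map (fun p => (negb (fst p), snd p)) w).

Lemma winv_prod w : word_prod G (winv w) = ginv G (word_prod G w).
Proof.
  induction w as [|[b s] w IH].
  - unfold winv; simpl. apply inv_uniq; apply gmul1.
  - unfold winv in *; simpl. rewrite word_prod_app, IH. simpl.
    rewrite gmul1r, ginv_mul. f_equal. destruct b; simpl; auto.
    rewrite ginv_inv; auto.
Qed.

Lemma nat_min (P : nat -> Prop) :
  (exists n, P n) -> exists n, P n /\ forall m, P m -> (n <= m)%nat.
Proof.
  intros [n Hn].
  destruct (classic (exists n, P n /\ forall m, P m -> (n <= m)%nat)) as [H|H]; auto.
  exfalso.
  assert (H0: forall k j, (j <= k)%nat -> ~ P j).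
  { induction k; intros j Hj Pj.
    - apply H; exists j; split; auto; intros m _; lia.
    - apply H; exists j; split; auto. intros m Pm.
      destruct (Nat.le_gt_cases j m); auto. exfalso; apply (IHk m); [lia|auto]. }
  apply (H0 n n); auto.
Qed.

Variable S : list G.
Hypothesis gen : generates G S.

Lemma wlen_spec x : word_le G S x (wlen G S x) /\
  forall m, word_le G S x m -> (wlen G S x <= m)%nat.
Proof.
  unfold wlen. apply epsilon_spec. apply nat_min. apply gen.
Qed.

Lemma wlen_inv x : (wlen G S (ginv G x) <= wlen G S x)%nat.
Proof.
  destruct (wlen_spec x) as [[w [Hf [Hl Hp]]] _].
  apply (proj2 (wlen_spec (ginv G x))).
  exists (winv w). split; [|split].
  - unfold winv. apply Forall_rev. apply Forall_map. exact Hf.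
  - unfold winv. rewrite length_rev, length_map. exact Hl.
  - rewrite winv_prod, Hp. reflexivity.
Qed.

Lemma wlen_mul a b : (wlen G S (gmul G a b) <= wlen G S a + wlen G S b)%nat.
Proof.
  destruct (wlen_spec a) as [[w1 [Hf1 [Hl1 Hp1]]] _].
  destruct (wlen_spec b) as [[w2 [Hf2 [Hl2 Hp2]]] _].
  apply (proj2 (wlen_spec _)).
  exists (w1 ++ w2). split; [|split].
  - apply Forall_app; auto.
  - rewrite length_app; lia.
  - rewrite word_prod_app, Hp1, Hp2; reflexivity.
Qed.

End Grp.

Lemma dist_sym (X : gpair) (x y : X) : dist X x y = dist X y x.
Proof.
  unfold dist, wdist. f_equal. apply Nat.le_antisymm.
  - replace (gmul X (ginv X x) y) with (ginv X (gmul X (ginv X y) x)).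
    + apply wlen_inv, gp_gen.
    + rewrite ginv_mul, ginv_inv; reflexivity.
  - replace (gmul X (ginv X y) x) with (ginv X (gmul X (ginv X x) y)).
    + apply wlen_inv, gp_gen.
    + rewrite ginv_mul, ginv_inv; reflexivity.
Qed.

Lemma dist_tri (X : gpair) (x y z : X) : dist X x z <= dist X x y + dist X y z.
Proof.
  unfold dist. rewrite <- plus_INR. apply le_INR. unfold wdist.
  replace (gmul X (ginv X x) z) with
    (gmul X (gmul X (ginv X x) y) (gmul X (ginv X y) z)).
  - apply wlen_mul, gp_gen.
  - rewrite <- gmulA, (gmulA X y (ginv X y) z), ginv_r, gmul1; reflexivity.
Qed.

Lemma dist_nn (X : gpair) (x y : X) : 0 <= dist X x y.
Proof. apply pos_INR. Qed.

Lemma glb_ok E : Rbar_is_glb E (Rbar_glb E).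
Proof. exact (proj2_sig (Rbar_ex_glb E)). Qed.
Lemma lub_ok E : Rbar_is_lub E (Rbar_lub E).
Proof. exact (proj2_sig (Rbar_ex_lub E)). Qed.

Lemma rbar_max_l x y : Rbar_le x (rbar_max x y).
Proof.
  unfold rbar_max; destruct (Rbar_le_dec x y); auto. apply Rbar_le_refl.
Qed.
Lemma rbar_max_r x y : Rbar_le y (rbar_max x y).
Proof.
  unfold rbar_max; destruct (Rbar_le_dec x y). apply Rbar_le_refl.
  apply Rbar_lt_le, Rbar_not_le_lt; auto.
Qed.

Lemma pdist_lt (X : gpair) a B M :
  Rbar_lt (pdist X a B) (Finite M) -> exists b, B b /\ dist X a b < M.
Proof.
  intro H. apply NNPP; intro Hn.
  assert (Hlb : Rbar_is_lower_bound
     (fun r => exists b, B b /\ r = Finite (dist X a b)) (Finite M)).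
  { intros r [b [Hb ->]]. simpl. apply Rnot_lt_le. intro Hl. apply Hn; eauto. }
  apply (Rbar_lt_not_le _ _ H). apply (proj2 (glb_ok _)). exact Hlb.
Qed.

Lemma haus_to (X : gpair) A1 A2 M : haus_lt X A1 A2 M ->
  (forall a, A1 a -> exists b, A2 b /\ dist X a b < M) /\
  (forall b, A2 b -> exists a, A1 a /\ dist X b a < M).
Proof.
  unfold haus_lt, hdist. intro H. split.
  - intros a Ha. apply pdist_lt.
    eapply Rbar_le_lt_trans; [|eapply Rbar_le_lt_trans; [apply rbar_max_l|exact H]].
    apply (proj1 (lub_ok _)). eauto.
  - intros a Ha. apply pdist_lt.
    eapply Rbar_le_lt_trans; [|eapply Rbar_le_lt_trans; [apply rbar_max_r|exact H]].
    apply (proj1 (lub_ok _)). eauto.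
Qed.

Lemma pdist_le (X : gpair) a B K : (exists b, B b /\ dist X a b <= K) ->
  Rbar_le (pdist X a B) (Finite K).
Proof.
  intros [b [Hb Hd]]. unfold pdist.
  eapply Rbar_le_trans. apply (proj1 (glb_ok _)). exists b; split; eauto.
  simpl. exact Hd.
Qed.

Lemma haus_from (X : gpair) (A1 A2 : X -> Prop) K M :
  (forall a, A1 a -> exists b, A2 b /\ dist X a b <= K) ->
  (forall b, A2 b -> exists a, A1 a /\ dist X b a <= K) ->
  K < M -> haus_lt X A1 A2 M.
Proof.
  intros H1 H2 HK. unfold haus_lt, hdist.
  apply Rbar_le_lt_trans with (Finite K); [|simpl; exact HK].
  assert (L1 : Rbar_le (Rbar_lub (fun r => exists a, A1 a /\ r = pdist X a A2)) (Finite K)).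
  { apply (proj2 (lub_ok _)). intros r [a [Ha ->]]. apply pdist_le; auto. }
  assert (L2 : Rbar_le (Rbar_lub (fun r => exists b, A2 b /\ r = pdist X b A1)) (Finite K)).
  { apply (proj2 (lub_ok _)). intros r [a [Ha ->]]. apply pdist_le; auto. }
  unfold rbar_max. destruct Rbar_le_dec; auto.
Qed.

Lemma haus_mono (X : gpair) A1 A2 M M' : haus_lt X A1 A2 M -> M <= M' -> haus_lt X A1 A2 M'.
Proof.
  unfold haus_lt. intros H HM. eapply Rbar_lt_le_trans; [exact H|simpl; exact HM].
Qed.

Lemma my_choice (A B : Type) (P : A -> B -> Prop) :
  (forall a, exists b, P a b) -> exists f : A -> B, forall a, P a (f a).
Proof.
  intro H. exists (fun a => proj1_sig (constructive_indefinite_description _ (H a))).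
  intro a. exact (proj2_sig (constructive_indefinite_description _ (H a))).
Qed.

Lemma low_bound d D L C : 1 <= L -> d / L - C <= D -> d <= L * D + L * C.
Proof.
  intros HL H.
  assert (d / L <= D + C) by lra.
  assert (L * (d / L) <= L * (D + C)) by (apply Rmult_le_compat_l; lra).
  replace (L * (d / L)) with d in H1 by (field; lra). lra.
Qed.

Lemma low_bound2 d D L K : 1 <= L -> 0 <= K -> d <= L * D + K * L -> d / L - K <= D.
Proof.
  intros HL HK H.
  assert (d * / L <= (L * D + K * L) * / L).
  { apply Rmult_le_compat_r; [apply Rlt_le, Rinv_0_lt_compat; lra|exact H]. }
  replace ((L * D + K * L) * / L) with (D + K) in H0 by (field; lra).
  unfold Rdiv. lra.
Qed.

Theorem lemma2p6 (X Y : gpair) :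
  (forall (L C M : R) (q : X -> Y),
     good_consts L C M -> qi_pairs X Y L C M q ->
     (forall A : cosets X, exists! B : cosets Y, qdot X Y M q A B) ->
     (forall B : cosets Y, exists! A : cosets X, qdot X Y M q A B) ->
     strongly_qi X Y) /\
  (strongly_qi X Y -> qi X Y).
Proof.
  split.
  - intros L C M q [HL [HC HM]] [[Hqi Hsurj] [HA HB]] huA huB.
    destruct (my_choice _ _ _ Hsurj) as [r1 Hr1].
    destruct (my_choice _ _ _ HA) as [f2 Hf2].
    destruct (my_choice _ _ _ (fun b => HB b)) as [r2 Hr2].
    assert (E1 : forall A, r2 (f2 A) = A).
    { intro A. destruct (huB (f2 A)) as [A0 [_ Hu]].
      transitivity A0; [symmetry; apply Hu, Hr2|apply Hu, Hf2]. }
    assert (E2 : forall B, f2 (r2 B) = B).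
    { intro B. destruct (huA (r2 B)) as [B0 [_ Hu]].
      transitivity B0; [symmetry; apply Hu, Hf2|apply Hu, Hr2]. }
    assert (Hlow : forall x x', dist X x x' <= L * dist Y (q x) (q x') + L * C).
    { intros x x'. apply low_bound; auto. apply Hqi. }
    assert (Hup : forall x x', dist Y (q x) (q x') <= L * dist X x x' + C) by apply Hqi.
    assert (Hlipq : lipschitz X Y L (3 * L * C) q).
    { intros x x'. specialize (Hup x x'). nra. }
    assert (Hlipr : lipschitz Y X L (3 * L * C) r1).
    { intros y y'. eapply Rle_trans; [apply Hlow|].
      assert (dist Y (q (r1 y)) (q (r1 y')) <= C + dist Y y y' + C).
      { eapply Rle_trans; [apply dist_tri with (y := y)|].
        eapply Rle_trans; [apply Rplus_le_compat_r; apply Hr1|].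
        eapply Rle_trans; [apply Rplus_le_compat_l; apply dist_tri with (y := y')|].
        rewrite (dist_sym Y y' (q (r1 y'))). specialize (Hr1 y'). lra. }
      nra. }
    assert (Hfq : lip_map_pairs X Y L (3 * L * C) (L * (M + 2 * C) + 1) q f2).
    { split; auto. intro A. eapply haus_mono; [apply Hf2|]. nra. }
    assert (Hfr : lip_map_pairs Y X L (3 * L * C) (L * (M + 2 * C) + 1) r1 r2).
    { split; auto. intro B. specialize (Hr2 B). unfold qdot in Hr2.
      destruct (haus_to _ _ _ _ Hr2) as [H1 H2].
      apply haus_from with (K := L * (M + 2 * C)); [| |lra].
      - intros x [b [Hb <-]]. destruct (H2 b Hb) as [qa [[a [Ha <-]] Hd]].
        exists a; split; auto. eapply Rle_trans; [apply Hlow|].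
        assert (dist Y (q (r1 b)) (q a) <= C + M).
        { eapply Rle_trans; [apply dist_tri with (y := b)|]. specialize (Hr1 b). lra. }
        nra.
      - intros a Ha. destruct (H1 (q a) (ex_intro _ a (conj Ha eq_refl))) as [b [Hb Hd]].
        exists (r1 b); split; [exists b; auto|].
        eapply Rle_trans; [apply Hlow|].
        assert (dist Y (q a) (q (r1 b)) <= M + C).
        { eapply Rle_trans; [apply dist_tri with (y := b)|].
          rewrite (dist_sym Y b). specialize (Hr1 b). lra. }
        nra. }
    exists L, (3 * L * C), (L * (M + 2 * C) + 1), q, f2.
    split; [split; [lra|split; nra]|].
    exists r1, r2. split.
    + split; [exact Hfq|split; [exact Hfr|split; [|exact E1]]].
      intro x. eapply Rle_trans; [apply Hlow|]. specialize (Hr1 (q x)). nra.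
    + split; [exact Hfr|split; [exact Hfq|split; [|exact E2]]].
      intro y. specialize (Hr1 y). nra.
  - intros [L [C [M [f1 [f2 [[HL [HC HM]] [r1 [r2 [Q1 Q2]]]]]]]]].
    destruct Q1 as [[Hlf Hhf] [[Hlr Hhr] [Hrf Hrfid]]].
    destruct Q2 as [_ [_ [Hfr Hfrid]]].
    exists L, (3 * C), M, f1. split; [split; [lra|split; lra]|].
    split; [split|split].
    + intros x x'. split.
      * apply low_bound2; [lra|lra|].
        assert (dist X x x' <= C + (L * dist Y (f1 x) (f1 x') + C) + C).
        { eapply Rle_trans; [apply dist_tri with (y := r1 (f1 x))|].
          eapply Rle_trans; [apply Rplus_le_compat_r; rewrite dist_sym; apply Hrf|].
          eapply Rle_trans; [apply Rplus_le_compat_l; apply dist_tri with (y := r1 (f1 x'))|].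
          specialize (Hlr (f1 x) (f1 x')). specialize (Hrf x'). lra. }
        nra.
      * specialize (Hlf x x'). lra.
    + intro y. exists (r1 y). specialize (Hfr y). lra.
    + intro A. exists (f2 A). apply Hhf.
    + intro B. exists (r2 B). unfold qdot. rewrite <- (Hfrid B) at 2. apply Hhf.
Qed.
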